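(* Identify $\mathrm{SO}(2)$ with $\mathbb{C}_1=\{z\in\mathbb{C}:|z|=1\}$, let $n$ be even, let $G([n],E)$ be the complete graph, and let $\boldsymbol{z}^\star\in\mathbb{C}_1^n$ be the ground truth. Then there exist a choice of bad edges $E_b\subset E$ such that every node $j$ is incident to exactly one edge of $E_b$, a choice of corrupted measurements $z_{jk}\in\mathbb{C}_1$ for $jk\in E_b$ (with $z_{jk}=z_j^\star\overline{z_k^\star}$ for $jk\in E\setminus E_b$), and a point $\hat{\boldsymbol{z}}\in\mathbb{C}_1^n$ with $0<\delta(\hat{\boldsymbol{z}})<\pi$ that is a fixed point of GD-$L_1$-MRA, i.e. $\partial_vF_\angle^j(\hat z_j;\hat{\boldsymbol{z}})\ge 0$ for all $j\in[n]$ and $v\in\{\pm1\}$.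
   Context: $d_\angle(z_1,z_2)=|\arg(z_1\overline{z_2})|$ with $\arg\in(-\pi,\pi]$; $\delta(\boldsymbol{z})=\max_{jk\in E}d_\angle(\overline{z_j^\star}z_j,\overline{z_k^\star}z_k)$. Coordinate energy: $F_\angle^j(y;\boldsymbol{z})=\sum_{k\in[n]\setminus\{j\}}d_\angle(y,z_{jk}z_k)$; for $v\in\{\pm1\}$, $\partial_vF_\angle^j(y;\boldsymbol{z})=\lim_{h\to0^+}(F_\angle^j(e^{ivh}y;\boldsymbol{z})-F_\angle^j(y;\boldsymbol{z}))/h$. GD-$L_1$-MRA cyclically updates one coordinate $j$ at a time: if some $v\in\{\pm1\}$ has $\partial_vF_\angle^j(z_j;\boldsymbol{z})<0$, it moves $z_j$ along $s\mapsto e^{ivs}z_j$ to the first point of $\{\pm z_{jk}z_k\}$ at which $\partial_vF_\angle^j\ge0$; otherwise $z_j$ is left unchanged. Hence its fixed points are exactly the $\boldsymbol{z}$ with $\partial_vF_\angle^j(z_j;\boldsymbol{z})\ge0$ for all $j$ and $v\in\{\pm1\}$. *)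

(* Defs.v *)
From Stdlib Require Import Reals List Arith.
From Coquelicot Require Import Coquelicot.
Open Scope R_scope.

Definition Carg (z : C) : R :=
  if Rle_dec 0 (Im z) then acos (Re z / Cmod z)
  else - acos (Re z / Cmod z).

Definition d_ang (z1 z2 : C) : R := Rabs (Carg (Cmult z1 (Cconj z2))).

Definition cexpi (t : R) : C := (cos t, sin t).

Definition sumR (l : list nat) (f : nat -> R) : R :=
  fold_right (fun k acc => f k + acc) 0 l.

Definition Fang (n : nat) (zm : nat -> nat -> C) (z : nat -> C) (j : nat) (y : C) : R :=
  sumR (filter (fun k => negb (Nat.eqb k j)) (seq 0 n))
       (fun k => d_ang y (Cmult (zm j k) (z k))).

Definition dirderiv_is (n : nat) (zm : nat -> nat -> C) (z : nat -> C) (j : nat)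
  (v : R) (y : C) (l : R) : Prop :=
  filterlim (fun h => (Fang n zm z j (Cmult (cexpi (v * h)) y) - Fang n zm z j y) / h)
            (at_right 0) (locally l).

Definition edges (n : nat) : list (nat * nat) :=
  flat_map (fun j => map (fun k => (j, k)) (seq (S j) (n - S j))) (seq 0 n).

(** delta(z) = max_{jk in E} d_angle(conj(zs_j) z_j, conj(zs_k) z_k)
    (the max of nonnegative numbers; 0 when E is empty). *)
Definition delta (n : nat) (zs z : nat -> C) : R :=
  fold_right Rmax 0
    (map (fun e => d_ang (Cmult (Cconj (zs (fst e))) (z (fst e)))
                         (Cmult (Cconj (zs (snd e))) (z (snd e)))) (edges n)).

(* Main.v *)
Require Import Defs.
From Stdlib Require Import Reals List Arith Lra Lia.
From Coquelicot Require Import Coquelicot.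
Open Scope R_scope.

Lemma PI_gt3 : 3 < PI.
Proof. pose proof PI2_3_2; lra. Qed.

Lemma Cmod1 (z : C) : Cmod z = 1 -> fst z * fst z + snd z * snd z = 1.
Proof.
  unfold Cmod; intros H.
  assert (H0 : 0 <= fst z ^ 2 + snd z ^ 2) by nra.
  pose proof (sqrt_sqrt _ H0) as H1. rewrite H in H1. simpl in H1. lra.
Qed.

Lemma Cmod_cexpi x : Cmod (cexpi x) = 1.
Proof.
  unfold Cmod, cexpi; simpl.
  replace (cos x * (cos x * 1) + sin x * (sin x * 1)) with 1.
  - apply sqrt_1.
  - pose proof (sin2_cos2 x). unfold Rsqr in *. lra.
Qed.

Lemma Carg_cexpi x : - PI < x <= PI -> Carg (cexpi x) = x.
Proof.
  intros Hx. unfold Carg. rewrite Cmod_cexpi. unfold cexpi; simpl.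
  rewrite Rdiv_1_r.
  destruct (Rle_dec 0 (sin x)) as [H|H].
  - destruct (Rlt_le_dec x 0) as [H1|H1].
    + pose proof (sin_lt_0_var x ltac:(lra) H1). lra.
    + apply acos_cos; lra.
  - destruct (Rlt_le_dec x 0) as [H1|H1].
    + rewrite <- cos_neg. rewrite acos_cos; lra.
    + pose proof (sin_ge_0 x H1 ltac:(lra)). lra.
Qed.

Lemma d_ang_core u w x : Cmult u (Cconj w) = cexpi x -> - PI < x <= PI ->
  d_ang u w = Rabs x.
Proof. intros H Hx. unfold d_ang. rewrite H, Carg_cexpi; auto. Qed.

Lemma prod_id t a g z : Cmod z = 1 ->
  Cmult (Cmult (cexpi t) (Cmult z (cexpi a))) (Cconj (Cmult z (cexpi g)))
  = cexpi (t + a - g).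
Proof.
  intros Hz. apply Cmod1 in Hz. destruct z as [p q]. simpl in Hz.
  unfold cexpi, Cmult, Cconj; simpl.
  rewrite cos_minus, sin_minus, cos_plus, sin_plus.
  f_equal.
  - transitivity ((p*p+q*q) * ((cos t * cos a - sin t * sin a) * cos g +
       (sin t * cos a + cos t * sin a) * sin g)); [ring| rewrite Hz; ring].
  - transitivity ((p*p+q*q) * ((sin t * cos a + cos t * sin a) * cos g -
       (cos t * cos a - sin t * sin a) * sin g)); [ring| rewrite Hz; ring].
Qed.

Lemma conj_cancel a w : Cmod w = 1 -> Cmult (Cmult a (Cconj w)) w = a.
Proof.
  intros Hw. apply Cmod1 in Hw. destruct a as [a1 a2], w as [p q]. simpl in Hw.
  unfold Cmult, Cconj; simpl. f_equal.
  - transitivity ((p*p+q*q) * a1); [ring| rewrite Hw; ring].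
  - transitivity ((p*p+q*q) * a2); [ring| rewrite Hw; ring].
Qed.

Lemma conj_cancel2 z w : Cmod z = 1 -> Cmult (Cconj z) (Cmult z w) = w.
Proof.
  intros Hw. apply Cmod1 in Hw. destruct w as [a1 a2], z as [p q]. simpl in Hw.
  unfold Cmult, Cconj; simpl. f_equal.
  - transitivity ((p*p+q*q) * a1); [ring| rewrite Hw; ring].
  - transitivity ((p*p+q*q) * a2); [ring| rewrite Hw; ring].
Qed.

Lemma conj_swap a b : Cconj (Cmult a (Cconj b)) = Cmult b (Cconj a).
Proof. destruct a, b; unfold Cmult, Cconj; simpl; f_equal; ring. Qed.

Lemma cexpi_conj a b : Cmult (cexpi a) (Cconj (cexpi b)) = cexpi (a - b).
Proof.
  unfold cexpi, Cmult, Cconj; simpl. rewrite cos_minus, sin_minus. f_equal; ring.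
Qed.

Lemma cexpi0_mul y : Cmult (cexpi 0) y = y.
Proof. destruct y. unfold cexpi, Cmult; simpl. rewrite cos_0, sin_0. f_equal; ring. Qed.

Lemma sumR_ext_in l f g : (forall k, In k l -> f k = g k) -> sumR l f = sumR l g.
Proof.
  induction l; simpl; intros H; auto.
  rewrite H by auto. rewrite IHl; auto.
Qed.

Lemma sumR_sub l f g : sumR l f - sumR l g = sumR l (fun k => f k - g k).
Proof. induction l; simpl; [lra|]. rewrite <- IHl. lra. Qed.

Lemma sumR_scal l h f : sumR l (fun k => h * f k) = h * sumR l f.
Proof. induction l; simpl; [lra|]. rewrite IHl. lra. Qed.

Lemma sumR_app l1 l2 f : sumR (l1 ++ l2) f = sumR l1 f + sumR l2 f.
Proof. induction l1; simpl; [lra|]. rewrite IHl1. lra. Qed.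

Lemma sumR_filter p l f :
  sumR (filter p l) f = sumR l (fun k => if p k then f k else 0).
Proof. induction l; simpl; auto. destruct (p a); simpl; rewrite IHl; lra. Qed.

Lemma sumR_pairs m g : (forall i, (i < m)%nat -> 0 <= g (2*i)%nat + g (2*i+1)%nat) ->
  0 <= sumR (seq 0 (2*m)) g.
Proof.
  induction m; intros H; [simpl; lra|].
  replace (2 * S m)%nat with (2*m + 2)%nat by lia.
  rewrite seq_app, sumR_app. simpl sumR at 2. simpl (0 + 2*m)%nat.
  replace (S (2*m)) with (2*m+1)%nat by lia.
  assert (0 <= sumR (seq 0 (2*m)) g) by (apply IHm; intros; apply H; lia).
  specialize (H m ltac:(lia)). replace (m + (m+0))%nat with (2*m)%nat by lia. replace (S (2*m)) with (2*m+1)%nat by lia. lra.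
Qed.

Lemma fold_max_le l c : 0 <= c -> (forall x, In x l -> x <= c) -> fold_right Rmax 0 l <= c.
Proof.
  induction l; simpl; intros; auto.
  apply Rmax_lub; auto.
Qed.

Lemma fold_max_ge l x : In x l -> x <= fold_right Rmax 0 l.
Proof.
  induction l; simpl; intros H; [contradiction|].
  destruct H as [->|H]; [apply Rmax_l|].
  eapply Rle_trans; [apply IHl; auto| apply Rmax_r].
Qed.

Lemma in_edges n a b : In (a, b) (edges n) -> (a < n)%nat /\ (b < n)%nat.
Proof.
  unfold edges. rewrite in_flat_map. intros [x [Hx Hin]].
  apply in_map_iff in Hin. destruct Hin as [k [Hk Hk2]]. inversion Hk; subst.
  apply in_seq in Hx. apply in_seq in Hk2. lia.
Qed.

Lemma edge01 n : (2 <= n)%nat -> In (0%nat, 1%nat) (edges n).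
Proof.
  intros H. unfold edges. rewrite in_flat_map. exists 0%nat. split.
  - apply in_seq; lia.
  - apply in_map_iff. exists 1%nat. split; auto. apply in_seq; lia.
Qed.

Lemma even2 i : Nat.even (2*i) = true.
Proof. apply Nat.even_spec. exists i. lia. Qed.
Lemma odd2 i : Nat.even (2*i+1) = false.
Proof. rewrite <- Nat.negb_odd. rewrite (proj2 (Nat.odd_spec _)); auto. exists i; lia. Qed.

Definition partner (j : nat) : nat := if Nat.even j then S j else pred j.
Definition alpha (j : nat) : R := if Nat.even j then 0 else PI/2.
Definition zhf (zs : nat -> C) (j : nat) : C := Cmult (zs j) (cexpi (alpha j)).
Definition zmf (zs : nat -> C) (j k : nat) : C :=
  if Nat.eqb (partner j) k then Cmult (zhf zs j) (Cconj (zhf zs k))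
  else Cmult (zs j) (Cconj (zs k)).
Definition gam (j k : nat) : R := if Nat.eqb (partner j) k then alpha j else alpha k.

Lemma partner_pair j : exists i, ((j = 2*i)%nat /\ (partner j = 2*i+1)%nat /\ alpha j = 0) \/
                                 ((j = 2*i+1)%nat /\ (partner j = 2*i)%nat /\ alpha j = PI/2).
Proof.
  destruct (Nat.Even_or_Odd j) as [[i ->]|[i ->]]; exists i; unfold partner, alpha.
  - left. rewrite even2. repeat split; lia.
  - right. rewrite odd2. repeat split; try lia; auto.
Qed.

Lemma alpha2 i : alpha (2*i) = 0.
Proof. unfold alpha; rewrite even2; auto. Qed.
Lemma alpha21 i : alpha (2*i+1) = PI/2.
Proof. unfold alpha; rewrite odd2; auto. Qed.

Lemma alpha_cases j : alpha j = 0 \/ alpha j = PI/2.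
Proof. unfold alpha; destruct (Nat.even j); auto. Qed.

Lemma partner_invol j : partner (partner j) = j.
Proof.
  destruct (partner_pair j) as [i [[H1 [H2 _]]|[H1 [H2 _]]]]; rewrite H2; subst j.
  - replace (2*i+1)%nat with (S (2*i)) by lia. unfold partner.
    replace (S (2*i)) with (2*i+1)%nat by lia. rewrite odd2. lia.
  - unfold partner. rewrite even2. lia.
Qed.

Lemma partner_lt n j : Nat.Even n -> (j < n)%nat -> (partner j < n)%nat.
Proof.
  intros [m Hm] Hj. destruct (partner_pair j) as [i [[H1 [H2 _]]|[H1 [H2 _]]]]; lia.
Qed.

Lemma partner_neq j : partner j <> j.
Proof. destruct (partner_pair j) as [i [[H1 [H2 _]]|[H1 [H2 _]]]]; lia. Qed.

Lemma partner_eqb j k : Nat.eqb (partner k) j = Nat.eqb (partner j) k.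
Proof.
  destruct (Nat.eqb_spec (partner k) j), (Nat.eqb_spec (partner j) k); auto.
  - subst. rewrite partner_invol in n. congruence.
  - subst. rewrite partner_invol in n. congruence.
Qed.

Lemma Cmod_zh zs j : Cmod (zs j) = 1 -> Cmod (zhf zs j) = 1.
Proof. intros H. unfold zhf. rewrite Cmod_mult, H, Cmod_cexpi. ring. Qed.

Lemma term_lin v h D : (v = 1 \/ v = -1) -> (D = 0 \/ 1 < D \/ D < -1) -> 0 < h < 1 ->
  Rabs (v*h + D) - Rabs D = h * (Rabs (v + D) - Rabs D).
Proof.
  intros Hv HD Hh. destruct HD as [->|[HD|HD]].
  - rewrite !Rplus_0_r, Rabs_R0, Rabs_mult, (Rabs_pos_eq h) by lra. ring.
  - rewrite (Rabs_pos_eq D), (Rabs_pos_eq (v*h+D)), (Rabs_pos_eq (v+D));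
      [ring| destruct Hv; subst; lra ..].
  - rewrite (Rabs_left D), (Rabs_left (v*h+D)), (Rabs_left (v+D));
      [ring| destruct Hv; subst; lra ..].
Qed.

Lemma FangE n zs j t : (forall k, (k < n)%nat -> Cmod (zs k) = 1) -> (j < n)%nat ->
  - (PI/2) < t < PI/2 ->
  Fang n (zmf zs) (zhf zs) j (Cmult (cexpi t) (zhf zs j)) =
  sumR (filter (fun k => negb (Nat.eqb k j)) (seq 0 n)) (fun k => Rabs (t + alpha j - gam j k)).
Proof.
  intros Hzs Hj Ht. pose proof PI_gt3. unfold Fang. apply sumR_ext_in.
  intros k Hk. apply filter_In in Hk. destruct Hk as [Hk _]. apply in_seq in Hk.
  assert (E : Cmult (zmf zs j k) (zhf zs k) = Cmult (zs j) (cexpi (gam j k))).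
  { unfold zmf, gam. destruct (Nat.eqb (partner j) k).
    - apply conj_cancel. apply Cmod_zh, Hzs. lia.
    - unfold zhf. rewrite Cmult_assoc. rewrite conj_cancel; auto. apply Hzs; lia. }
  rewrite E. apply d_ang_core.
  - unfold zhf. apply prod_id. auto.
  - unfold gam. destruct (alpha_cases j) as [Ha|Ha]; destruct (alpha_cases k) as [Hb|Hb];
    destruct (Nat.eqb (partner j) k); rewrite ?Ha, ?Hb; lra.
Qed.

Lemma at_right_small (P : R -> Prop) : (forall h, 0 < h < 1 -> P h) -> at_right 0 P.
Proof.
  intros H. exists (mkposreal 1 Rlt_0_1). intros h Hb Hh. apply H. split; auto.
  unfold ball in Hb; simpl in Hb. unfold AbsRing_ball, abs, minus, plus, opp in Hb; simpl in Hb.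
  apply Rabs_def2 in Hb. lra.
Qed.

Lemma pair_nonneg j v i : (v = 1 \/ v = -1) ->
  0 <= (if negb (Nat.eqb (2*i) j) then Rabs (v + (alpha j - gam j (2*i))) - Rabs (alpha j - gam j (2*i)) else 0)
     + (if negb (Nat.eqb (2*i+1) j) then Rabs (v + (alpha j - gam j (2*i+1))) - Rabs (alpha j - gam j (2*i+1)) else 0).
Proof.
  intros Hv. pose proof PI_gt3. unfold gam. rewrite alpha2, alpha21.
  destruct (partner_pair j) as [i' [[H1 [H2 H3]]|[H1 [H2 H3]]]]; rewrite H2, H3;
  destruct (Nat.eqb_spec (2*i) j); destruct (Nat.eqb_spec (2*i+1) j);
  destruct (Nat.eqb_spec (2*i'+1) (2*i)); destruct (Nat.eqb_spec (2*i'+1) (2*i+1));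
  destruct (Nat.eqb_spec (2*i') (2*i)); destruct (Nat.eqb_spec (2*i') (2*i+1));
  try lia; simpl negb; cbv iota;
  destruct Hv; subst v; unfold Rabs; repeat destruct Rcase_abs; lra.
Qed.

Theorem lemma6 (n : nat) (zs : nat -> C) :
  (0 < n)%nat -> Nat.Even n ->
  (forall j, (j < n)%nat -> Cmod (zs j) = 1) ->
  exists (Eb : nat -> nat -> Prop) (zm : nat -> nat -> C) (zh : nat -> C),
    (forall j k, Eb j k -> (j < n)%nat /\ (k < n)%nat /\ j <> k) /\
    (forall j k, Eb j k -> Eb k j) /\
    (forall j, (j < n)%nat -> exists! k, Eb j k) /\
    (forall j k, (j < n)%nat -> (k < n)%nat -> j <> k ->
       Cmod (zm j k) = 1 /\ zm k j = Cconj (zm j k)) /\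
    (forall j k, (j < n)%nat -> (k < n)%nat -> j <> k -> ~ Eb j k ->
       zm j k = Cmult (zs j) (Cconj (zs k))) /\
    (forall j, (j < n)%nat -> Cmod (zh j) = 1) /\
    0 < delta n zs zh /\ delta n zs zh < PI /\
    (forall j, (j < n)%nat -> forall v : R, (v = 1 \/ v = -1) ->
       exists l, dirderiv_is n zm zh j v (zh j) l /\ 0 <= l).
Proof.
  intros Hn Hev Hzs. pose proof PI_gt3 as HPI.
  exists (fun j k => (j < n)%nat /\ k = partner j), (zmf zs), (zhf zs).
  repeat match goal with |- _ /\ _ => split end.
  - intros j k [Hj ->]. repeat split; auto. apply partner_lt; auto.
    intros H. apply (partner_neq j). auto.
  - intros j k [Hj ->]. split; [apply partner_lt; auto|]. symmetry; apply partner_invol.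
  - intros j Hj. exists (partner j). split; [split; auto|]. intros k [_ ->]; auto.
  - intros j k Hj Hk Hjk. unfold zmf. rewrite (partner_eqb j k).
    destruct (Nat.eqb (partner j) k).
    + rewrite Cmod_mult, Cmod_conj, !Cmod_zh by auto. split; [ring|]. symmetry; apply conj_swap.
    + rewrite Cmod_mult, Cmod_conj, !Hzs by auto. split; [ring|]. symmetry; apply conj_swap.
  - intros j k Hj Hk Hjk Hb. unfold zmf. destruct (Nat.eqb_spec (partner j) k); auto.
    exfalso; apply Hb; auto.
  - intros j Hj. apply Cmod_zh; auto.
  - assert (H2 : (2 <= n)%nat) by (destruct Hev as [m Hm]; lia).
    eapply Rlt_le_trans; [|apply fold_max_ge, in_map_iff; exists (0%nat, 1%nat); split; [reflexivity| apply edge01; auto]].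
    simpl. unfold zhf. rewrite !conj_cancel2 by (apply Hzs; lia).
    rewrite (d_ang_core _ _ (alpha 0 - alpha 1)).
    + unfold alpha; simpl. rewrite Rabs_left; lra.
    + apply cexpi_conj.
    + unfold alpha; simpl; lra.
  - apply Rle_lt_trans with (PI/2); [|lra].
    apply fold_max_le; [lra|]. intros x Hx. apply in_map_iff in Hx.
    destruct Hx as [[a b] [<- Hab]]. apply in_edges in Hab. simpl. unfold zhf.
    rewrite !conj_cancel2 by (apply Hzs; lia).
    rewrite (d_ang_core _ _ (alpha a - alpha b)).
    + destruct (alpha_cases a) as [-> | ->]; destruct (alpha_cases b) as [-> | ->];
      unfold Rabs; destruct Rcase_abs; lra.
    + apply cexpi_conj.
    + destruct (alpha_cases a) as [-> | ->]; destruct (alpha_cases b) as [-> | ->]; lra.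
  - intros j Hj v Hv.
    set (L := filter (fun k => negb (Nat.eqb k j)) (seq 0 n)).
    exists (sumR L (fun k => Rabs (v + (alpha j - gam j k)) - Rabs (alpha j - gam j k))).
    split.
    + unfold dirderiv_is. eapply filterlim_ext_loc; [|apply filterlim_const].
      apply at_right_small. intros h Hh.
      rewrite (FangE n zs j (v*h)) by (auto; destruct Hv; subst; lra).
      pose proof (FangE n zs j 0 Hzs Hj ltac:(lra)) as E0. rewrite cexpi0_mul in E0.
      rewrite E0. fold L. rewrite sumR_sub.
      assert (E : sumR L (fun k => Rabs (v * h + alpha j - gam j k) - Rabs (0 + alpha j - gam j k))
        = h * sumR L (fun k => Rabs (v + (alpha j - gam j k)) - Rabs (alpha j - gam j k))).
      { rewrite <- sumR_scal. apply sumR_ext_in.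
        intros k _. replace (v * h + alpha j - gam j k) with (v*h + (alpha j - gam j k)) by ring.
        replace (0 + alpha j - gam j k) with (alpha j - gam j k) by ring.
        apply term_lin; auto.
        unfold gam. destruct (alpha_cases j) as [Ha|Ha]; destruct (alpha_cases k) as [Hb|Hb];
        destruct (Nat.eqb (partner j) k); rewrite ?Ha, ?Hb; lra. }
      rewrite E. field. lra.
    + unfold L. rewrite sumR_filter. destruct Hev as [m Hm]. rewrite Hm.
      apply sumR_pairs. intros i _. apply pair_nonneg; auto.
Qed.
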